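(* Let $T_1\cup\dots\cup T_L=[n]$ be a partition, $p_\ell$ integers and $\Gamma$ an integer. The coefficient matrix (in the variables $(\pmb y,\pmb\delta)\in\mathbb R^n\times\mathbb R^n$) of the constraint system \[y_i+\delta_i\le1\ \ \forall i\in[n],\qquad \sum_{i\in[n]}\delta_i\le\Gamma,\qquad \sum_{i\in T_\ell}y_i=p_\ell\ \ \forall\ell\in[L]\] is totally unimodular.
   Context: $[n]=\{1,\dots,n\}$. This is the constraint system of the adversarial problem of balanced regret multi-representative selection for a fixed value of the auxiliary variable $s$, namely $\max\ \sum_i(\hat c_i+d_i\delta_i)x_i-\sum_i\hat c_iy_i-\Gamma's-\sum_i[d_i-d_ix_i-s]_+y_i$ subject to these constraints and $\pmb y,\pmb\delta$ binary. *)

(* Defs.v *)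
From mathcomp Require Import all_boot all_order all_algebra.
Set Implicit Arguments. Unset Strict Implicit. Unset Printing Implicit Defensive.
Import GRing.Theory Num.Theory.
Local Open Scope ring_scope.

Definition totally_unimodular (m n : nat) (A : 'M[int]_(m, n)) : Prop :=
  forall (k : nat) (f : 'I_k -> 'I_m) (g : 'I_k -> 'I_n),
    injective f -> injective g ->
    let d := \det (\matrix_(i < k, j < k) A (f i) (g j)) in
    d = 0 \/ d = 1 \/ d = -1.

(* Incidence matrix of the partition given by the block map T : [n] -> [L]:
   entry (l, i) is 1 iff i belongs to T_l. *)
Definition part_mx (n L : nat) (T : 'I_n -> 'I_L) : 'M[int]_(L, n) :=
  \matrix_(l < L, i < n) (T i == l)%:R.

(* Coefficient matrix in variables (y, delta) in R^n x R^n of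
     y_i + delta_i <= 1            (n rows)
     sum_i delta_i <= Gamma        (1 row)
     sum_{i in T_l} y_i = p_l      (L rows)                                *)
Definition brmrs_mx (n L : nat) (T : 'I_n -> 'I_L) : 'M[int]_(n + (1 + L), n + n) :=
  col_mx (row_mx (1%:M : 'M[int]_n) (1%:M : 'M[int]_n))
    (col_mx (row_mx (0 : 'M[int]_(1, n)) (const_mx 1 : 'M[int]_(1, n)))
            (row_mx (part_mx T) (0 : 'M[int]_(L, n)))).

(* Main.v *)
Require Import Defs.
From mathcomp Require Import all_boot all_order all_algebra.
Import GRing.Theory Num.Theory.
Local Open Scope ring_scope.

Lemma tu_core k (M : 'M[int]_k) (side : 'I_k -> bool) :
  (forall i j, M i j = 0 \/ M i j = 1) ->
  (forall j i1 i2, M i1 j = 1 -> M i2 j = 1 -> side i1 = side i2 -> i1 = i2) ->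
  \det M = 0 \/ \det M = 1 \/ \det M = -1.
Proof.
elim: k M side => [|k IH] M side H01 Hinj; first by rewrite det_mx00; auto.
have [[j [i0 [Hi0 Hu]]]|Hnu] : (exists j, exists i0, M i0 j = 1 /\ forall i, M i j = 1 -> i = i0) \/
   (forall j i0, M i0 j = 1 -> exists2 i, M i j = 1 & i != i0).
  case: (boolP [exists j, [exists i0, (M i0 j == 1) && [forall i, (M i j == 1) ==> (i == i0)]]]).
    move/existsP=> [j /existsP [i0 /andP [/eqP H1 /forallP H2]]]; left; exists j, i0; split=> // i Hi.
    by apply/eqP; move/implyP: (H2 i); apply; apply/eqP.
  rewrite negb_exists => /forallP H; right => j i0 Hi0.
  move: (H j); rewrite negb_exists => /forallP/(_ i0); rewrite Hi0 eqxx /= negb_forall.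
  move/existsP => [i]; rewrite negb_imply => /andP [/eqP Hi Hne]; by exists i.
- rewrite (expand_det_col M j) (bigD1 i0) //= big1 ?addr0; last first.
    move=> i Hi; case: (H01 i j) => [->|/Hu Hi0']; first by rewrite mul0r.
    by rewrite Hi0' eqxx in Hi.
  rewrite Hi0 mul1r /cofactor.
  have Hd : let d := \det (row' i0 (col' j M)) in d = 0 \/ d = 1 \/ d = -1.
    apply: (IH _ (side \o lift i0)) => [a b|b a1 a2]; rewrite !mxE //.
    move=> /= H1 H2 H3; exact: (lift_inj (Hinj _ _ _ H1 H2 H3)).
  move: Hd => /=.
  rewrite -signr_odd; case: (odd _); rewrite ?expr0 ?expr1 ?mul1r ?mulN1r.
  + by case=> [->|[->|->]]; rewrite ?oppr0 ?opprK; auto.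
  + by case=> [->|[->|->]]; auto.
case: (boolP [exists j, [forall i, M i j == 0]]).
  move/existsP=> [j /forallP Hz]; left.
  by rewrite (expand_det_col M j) big1 // => i _; rewrite (eqP (Hz i)) mul0r.
rewrite negb_exists => /forallP Hnz.
have Hcol : forall j, exists i1 i2, [/\ M i1 j = 1, M i2 j = 1, i2 != i1 & side i2 = ~~ side i1].
  move=> j; move: (Hnz j); rewrite negb_forall => /existsP [i1 Hi1].
  have Hi1' : M i1 j = 1 by case: (H01 i1 j) => // E; rewrite E eqxx in Hi1.
  have [i2 Hi2 Hne] := Hnu j i1 Hi1'.
  exists i1, i2; split=> //.
  case E: (side i2); case E': (side i1) => //=; exfalso; move/negP: Hne; apply; apply/eqP;
    apply: (Hinj j) => //; by rewrite E E'.
pose v := \row_(i < k.+1) (if side i then 1 else -1 : int).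
have Hv : v *m M = 0.
  apply/rowP => j; rewrite !mxE.
  have [i1 [i2 [H1 H2 Hne Hs]]] := Hcol j.
  rewrite (bigD1 i1) //= (bigD1 i2) /=; last by rewrite Hne.
  rewrite big1 ?addr0; last first.
    move=> i /andP [Ha Hb]; case: (H01 i j) => [->|Hi]; first by rewrite mulr0.
    exfalso; case E: (side i1) Hs => Hs.
    - case E': (side i).
      + by move/negP: Ha; apply; apply/eqP; apply: (Hinj j) => //; rewrite E E'.
      + by move/negP: Hb; apply; apply/eqP; apply: (Hinj j) => //; rewrite Hs E'.
    - case E': (side i).
      + by move/negP: Hb; apply; apply/eqP; apply: (Hinj j) => //; rewrite Hs E'.
      + by move/negP: Ha; apply; apply/eqP; apply: (Hinj j) => //; rewrite E E'.
  by rewrite !mxE H1 H2 Hs; case: (side i1) => /=; rewrite ?mulr1 ?subrr // addrC subrr.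
left.
have := congr1 (fun X => X *m \adj M) Hv.
rewrite /= -mulmxA mul_mx_adj mul0mx mul_mx_scalar => /rowP/(_ ord0); rewrite !mxE.
move/eqP; rewrite mulf_eq0 => /orP [/eqP //|].
by case: (side ord0).
Qed.

Lemma natb1 (b : bool) : (1 *+ b : int) = 1 -> b.
Proof. by case: b. Qed.

Lemma A01 n L (T : 'I_n -> 'I_L) r c : brmrs_mx T r c = 0 \/ brmrs_mx T r c = 1.
Proof.
rewrite /brmrs_mx.
case: (split_ordP r) => [i ->|r1 ->]; [|case: (split_ordP r1) => [o ->|l ->]];
  case: (split_ordP c) => [j ->|j ->];
  rewrite ?(col_mxEu, col_mxEd, row_mxEl, row_mxEr) !mxE; try case: (_ == _); auto.
Qed.

Lemma Ainj n L (T : 'I_n -> 'I_L) c r1 r2 :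
  brmrs_mx T r1 c = 1 -> brmrs_mx T r2 c = 1 -> (r1 < n)%N = (r2 < n)%N -> r1 = r2.
Proof.
rewrite /brmrs_mx.
case: (split_ordP r1) => [i1 ->|s1 ->]; [|case: (split_ordP s1) => [o1 ->|l1 ->]];
case: (split_ordP r2) => [i2 ->|s2 ->]; try case: (split_ordP s2) => [o2 ->|l2 ->];
  case: (split_ordP c) => [j ->|j ->];
  rewrite ?(col_mxEu, col_mxEd, row_mxEl, row_mxEr) !mxE /= ?ltn_ord ?(ltnNge n (n + _)) ?leq_addr //=.
all: try (move=> /natb1/eqP E1 /natb1/eqP E2 _; congr lshift; congr lshift; congr rshift; congr rshift; congruence).
all: try (move=> /natb1/eqP E1 /natb1/eqP E2 _; congr rshift; congr rshift; congruence).
all: try (move=> /natb1/eqP E1 /natb1/eqP E2 _; congr lshift; congruence).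
all: try (move=> _ _ _; congr rshift; congr lshift; apply: ord_inj; by rewrite !ord1).
Qed.

Theorem lemma6 (n L : nat) (T : 'I_n -> 'I_L)
    (T_onto : forall l : 'I_L, exists i : 'I_n, T i = l)
    (p : 'I_L -> int) (Gamma : int) :
  totally_unimodular (brmrs_mx T).
Proof.
move=> k f g injf injg /=.
apply: (@tu_core _ _ (fun i => (f i < n)%N)).
- by move=> i j; rewrite mxE; exact: A01.
- have E : forall a b, (\matrix_(i < k, j < k) brmrs_mx T (f i) (g j)) a b = brmrs_mx T (f a) (g b).
    by move=> a b; rewrite mxE.
  move=> j i1 i2; rewrite !E => H1 H2 H3; apply: injf; exact: (@Ainj _ _ _ _ _ _ H1 H2 H3).
Qed.
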